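(* Let $n\ge2$ and $k\in\{2,\dots,n\}$. Then $$\Lambda_n+(-1)^k\sum_{\pi\in\mathcal M_n^k}\pi(\Lambda_n)\equiv0\pmod{R(n)}.$$
   Context: An $n$-graph is an oriented graph with vertex set $\{1,\dots,n\}$, without loops but possibly with multiple edges; $\mathcal G(n)$ is the set of $n$-graphs and $\mathbb F\mathcal G(n)$ the vector space over a field $\mathbb F$ (characteristic $0$) with basis $\mathcal G(n)$. $R(n)$ is the subspace spanned by: (i) every $\Gamma$ containing a cycle of its underlying unoriented multigraph (two edges joining the same two vertices count as a cycle); (ii) every sum $\sum_{e\in C}\Gamma\setminus e$ with $C\subset E(\Gamma)$ an oriented cycle and $\Gamma\setminus e$ the graph with $e$ removed. $\equiv$ means equality in $\mathbb F\mathcal G(n)/R(n)$. $\Lambda_n$ is the $n$-graph with edges $1\to2,\dots,(n-1)\to n$. For $\sigma\in S_n$, $\sigma(\Gamma)$ is $\Gamma$ with vertex $i$ relabeled $\sigma(i)$ (edge $i\to j$ becomes $\sigma(i)\to\sigma(j)$). A permutation $\pi\in S_n$ is monotone if for each $i$ either $\pi(j)<\pi(i)$ for all $j<i$ or $\pi(j)>\pi(i)$ for all $j<i$; $\mathcal M_n^k$ is the set of monotone permutations with $\pi(1)=k$. *)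

(* Defs.v *)
From mathcomp Require Import all_boot all_order all_algebra all_fingroup.
Set Implicit Arguments. Unset Strict Implicit. Unset Printing Implicit Defensive.
Import GRing.Theory.
Local Open Scope ring_scope.

(* Vertex i of the paper (1 <= i <= n) is the ordinal i-1 : 'I_n.
   An oriented multigraph is given by its edge multiplicity function:
   g (i, j) = number of edges i -> j. *)
Definition mgraph (n : nat) := {ffun 'I_n * 'I_n -> nat}.

Definition loopless n (g : mgraph n) : bool := [forall i, g (i, i) == 0%N].

(* Elements of F G(n): finite formal linear combinations of graphs,
   compared through their coefficient functions. *)
Definition fcomb (F : fieldType) n := seq (F * mgraph n).
Definition coef (F : fieldType) n (x : fcomb F n) (g : mgraph n) : F :=
  \sum_(p <- x) (if p.2 == g then p.1 else 0).

Definition del_edge n (g : mgraph n) (e : 'I_n * 'I_n) : mgraph n :=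
  [ffun p => if p == e then (g p).-1 else g p].

Definition und_mult n (g : mgraph n) (i j : 'I_n) : nat := (g (i, j) + g (j, i))%N.

(* g has a cycle in its underlying unoriented multigraph: distinct vertices
   v_0,...,v_{m-1} (m >= 2) cyclically joined by distinct edges; for m = 2
   this means two distinct edges joining v_0 and v_1. *)
Definition has_ucycle n (g : mgraph n) : Prop :=
  exists s : seq 'I_n, [/\ uniq s, (2 <= size s)%N &
    if size s == 2%N then all (fun x => (1 < und_mult g x (next s x))%N) s
    else all (fun x => (0 < und_mult g x (next s x))%N) s].

Definition is_ocycle n (g : mgraph n) (s : seq 'I_n) : Prop :=
  [/\ uniq s, (2 <= size s)%N & all (fun x => (0 < g (x, next s x))%N) s].

Definition cycle_rel (F : fieldType) n (g : mgraph n) (s : seq 'I_n) : fcomb F n :=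
  [seq (1, del_edge g (x, next s x)) | x <- s].

Definition R_gen (F : fieldType) n (x : fcomb F n) : Prop :=
  (exists g : mgraph n, [/\ loopless g, has_ucycle g & x = [:: (1, g)]]) \/
  (exists (g : mgraph n) (s : seq 'I_n),
      [/\ loopless g, is_ocycle g s & x = cycle_rel F g s]).

(* x lies in R(n) = span of the generators, i.e. x == 0 in F G(n) / R(n) *)
Definition equiv0 (F : fieldType) n (x : fcomb F n) : Prop :=
  exists l : seq (F * fcomb F n),
    (forall p, p \in l -> R_gen p.2) /\
    forall g : mgraph n, coef x g = \sum_(p <- l) p.1 * coef p.2 g.

Definition Lambda n : mgraph n := [ffun p => nat_of_bool ((val p.1).+1 == val p.2)].

(* sigma(Gamma): edge i -> j becomes sigma i -> sigma j *)
Definition relabel n (s : 'S_n) (g : mgraph n) : mgraph n :=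
  [ffun p => g ((s^-1)%g p.1, (s^-1)%g p.2)].

Definition monotone n (p : 'S_n) : bool :=
  [forall i : 'I_n,
     [forall (j : 'I_n | (val j < val i)%N), (val (p j) < val (p i))%N] ||
     [forall (j : 'I_n | (val j < val i)%N), (val (p i) < val (p j))%N]].

(* M_n^k : monotone permutations with pi(1) = k  (i.e. p(0) = k-1 here) *)
Definition Mnk n k : {set 'S_n} :=
  [set p : 'S_n | monotone p &
     [forall i : 'I_n, (val i == 0%N) ==> (val (p i) == k.-1)]].

Definition lemma_comb (F : fieldType) n k : fcomb F n :=
  (1, Lambda n) :: [seq ((-1) ^+ k, relabel p (Lambda n)) | p <- enum (Mnk n k)].

(* Main.v *)
Require Import Defs.
From mathcomp Require Import all_boot all_order all_algebra all_fingroup.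
From mathcomp Require Import zify ring.
Set Implicit Arguments. Unset Strict Implicit. Unset Printing Implicit Defensive.
Import GRing.Theory.

Module PartA.
Local Open Scope ring_scope.

Lemma cf_cons (F : fieldType) n a (h : mgraph n) (x : fcomb F n) g :
  coef ((a, h) :: x) g = a * (h == g)%:R + coef x g.
Proof. by rewrite /coef big_cons /=; case: eqP => _; rewrite ?mulr1 ?mulr0. Qed.

Lemma cf_nil (F : fieldType) n g : coef ([::] : fcomb F n) g = 0.
Proof. by rewrite /coef big_nil. Qed.

Lemma cf_cat (F : fieldType) n (x y : fcomb F n) g : coef (x ++ y) g = coef x g + coef y g.
Proof. by rewrite /coef big_cat. Qed.

Lemma cf_map (F : fieldType) n (T : Type) (a : F) (f : T -> mgraph n) s g :
  coef [seq (a, f w) | w <- s] g = a * \sum_(w <- s) (f w == g)%:R.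
Proof.
rewrite /coef big_map mulr_sumr; apply: eq_bigr => w _ /=.
by case: eqP => _; rewrite ?mulr1 ?mulr0.
Qed.

Lemma equiv0_ext (F : fieldType) n (x y : fcomb F n) :
  (forall g, coef y g = coef x g) -> equiv0 x -> equiv0 y.
Proof. by move=> H [l [Hl Hc]]; exists l; split => // g; rewrite H. Qed.

Lemma equiv0_nil (F : fieldType) n : equiv0 ([::] : fcomb F n).
Proof. by exists [::]; split => // g; rewrite cf_nil big_nil. Qed.

Lemma equiv0_gen (F : fieldType) n (x : fcomb F n) : R_gen x -> equiv0 x.
Proof.
move=> H; exists [:: (1, x)]; split; first by move=> p; rewrite inE => /eqP ->.
by move=> g; rewrite big_cons big_nil /= mul1r addr0.
Qed.

Lemma equiv0_cat (F : fieldType) n (x y : fcomb F n) :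
  equiv0 x -> equiv0 y -> equiv0 (x ++ y).
Proof.
move=> [l1 [H1 C1]] [l2 [H2 C2]]; exists (l1 ++ l2); split.
  by move=> p; rewrite mem_cat => /orP [/H1|/H2].
by move=> g; rewrite cf_cat big_cat C1 C2.
Qed.

Definition scale (F : fieldType) n (a : F) (x : fcomb F n) : fcomb F n :=
  [seq (a * p.1, p.2) | p <- x].

Lemma cf_scale (F : fieldType) n a (x : fcomb F n) g : coef (scale a x) g = a * coef x g.
Proof.
rewrite /coef big_map mulr_sumr; apply: eq_bigr => p _ /=.
by case: eqP => _; rewrite ?mulr0.
Qed.

Lemma equiv0_scale (F : fieldType) n a (x : fcomb F n) : equiv0 x -> equiv0 (scale a x).
Proof.
move=> [l [H C]]; exists [seq (a * p.1, p.2) | p <- l]; split.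
  by move=> p /mapP [q /H Hq ->].
by move=> g; rewrite cf_scale C big_map mulr_sumr; apply: eq_bigr => p _; rewrite mulrA.
Qed.

Lemma equiv0_comb (F : fieldType) n (l : seq (F * fcomb F n)) (z : fcomb F n) :
  (forall p, p \in l -> equiv0 p.2) ->
  (forall g, coef z g = \sum_(p <- l) p.1 * coef p.2 g) -> equiv0 z.
Proof.
elim: l z => [|[a x] l IH] z H C.
  by apply: (equiv0_ext _ (equiv0_nil F n)) => g; rewrite C big_nil cf_nil.
have E1 : equiv0 (scale a x) by apply: equiv0_scale; exact: (H (a, x) (mem_head _ _)).
have E2 : equiv0 (flatten [seq scale p.1 p.2 | p <- l]).
  have : forall p, p \in l -> equiv0 p.2 by move=> p Hp; apply: H; rewrite inE Hp orbT.
  elim: (l) => [|q l' IH'] H'; first exact: equiv0_nil.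
  by apply: equiv0_cat; [apply: equiv0_scale; apply: H'; exact: mem_head|
     apply: IH' => p Hp; apply: H'; rewrite inE Hp orbT].
apply: (equiv0_ext _ (equiv0_cat E1 E2)) => g.
rewrite C big_cons cf_cat cf_scale /=; congr (_ + _).
elim: (l) => [|q l' IH']; first by rewrite big_nil cf_nil.
by rewrite big_cons /= cf_cat cf_scale IH'.
Qed.

Fixpoint alleq (F : fieldType) n (l : seq (F * fcomb F n)) : Prop :=
  match l with [::] => True | p :: l' => equiv0 p.2 /\ alleq l' end.

Lemma equiv0_combA (F : fieldType) n (l : seq (F * fcomb F n)) (z : fcomb F n) :
  alleq l -> (forall g, coef z g = \sum_(p <- l) p.1 * coef p.2 g) -> equiv0 z.
Proof.
move=> H; apply: equiv0_comb => p.
elim: l H => // q l IH /= [H1 H2]; rewrite inE => /orP [/eqP -> //|]; exact: IH.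
Qed.

End PartA.
Import PartA.

Module PartB.
Local Open Scope ring_scope.

Definition G n (es : seq ('I_n * 'I_n)) : mgraph n := [ffun e => count_mem e es].

Lemma G_perm n (es es' : seq ('I_n * 'I_n)) : perm_eq es es' -> G es = G es'.
Proof. by move/seq.permP => H; apply/ffunP => e; rewrite !ffunE H. Qed.

Lemma del_G n (e : 'I_n * 'I_n) es : del_edge (G (e :: es)) e = G es.
Proof.
apply/ffunP => p; rewrite !ffunE /=; case: eqP => [->|/eqP Hp]; first by rewrite eqxx.
by rewrite eq_sym (negbTE Hp).
Qed.

Definition nl n (es : seq ('I_n * 'I_n)) := all (fun e => e.1 != e.2) es.

Lemma nl_loopless n (es : seq ('I_n * 'I_n)) : nl es -> loopless (G es).
Proof.
move=> H; apply/forallP => i; rewrite ffunE; apply/eqP/count_memPn.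
by apply/negP => /(allP H) /=; rewrite eqxx.
Qed.

Lemma G_pos n (e : 'I_n * 'I_n) es : e \in es -> (0 < G es e)%N.
Proof. by move=> H; rewrite ffunE -has_count; apply/hasP; exists e => //=. Qed.

Lemma rev_gen (F : fieldType) n (a b : 'I_n) C : a != b -> nl C ->
  equiv0 ([:: (1, G ((a, b) :: C)); (1, G ((b, a) :: C))] : fcomb F n).
Proof.
move=> ab HC.
have Hg : R_gen (cycle_rel F (G ((a,b) :: (b,a) :: C)) [:: a; b]).
  right; exists (G ((a,b) :: (b,a) :: C)), [:: a; b]; split => //.
    by apply: nl_loopless; rewrite /nl /= ab eq_sym ab.
  split => //=; first by rewrite inE ab.
  rewrite /next /=. idtac.
  rewrite eqxx (eq_sym b a) (negbTE ab) eqxx /=. by rewrite !G_pos // !inE eqxx ?orbT.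
apply: (equiv0_ext _ (equiv0_gen Hg)) => g.
rewrite /cycle_rel /next /= eqxx eq_sym (negbTE ab) eqxx /=.
rewrite del_G (G_perm (_ : perm_eq ((a, b) :: (b, a) :: C) ((b, a) :: (a, b) :: C))).
  by rewrite del_G !cf_cons cf_nil; ring.
by apply/seq.permP => q; rewrite /=; lia.
Qed.

Ltac permt := apply/seq.permP; let q := fresh "q" in intro q; do 5 rewrite /= ?count_cat; clear - q; lia.

Lemma tri_gen (F : fieldType) n (a b c : 'I_n) C : a != b -> a != c -> b != c -> nl C ->
  equiv0 ([:: (1, G ((b, c) :: (c, a) :: C)); (1, G ((a, b) :: (c, a) :: C));
              (1, G ((a, b) :: (b, c) :: C))] : fcomb F n).
Proof.
move=> ab ac bc HC.
have ba : b != a by rewrite eq_sym.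
have ca : c != a by rewrite eq_sym.
have cb : c != b by rewrite eq_sym.
have Hg : R_gen (cycle_rel F (G ((a,b) :: (b,c) :: (c,a) :: C)) [:: a; b; c]).
  right; exists (G ((a,b) :: (b,c) :: (c,a) :: C)), [:: a; b; c]; split => //.
    by apply: nl_loopless; rewrite /nl /= ab bc ca.
  split => //=; first by rewrite !inE negb_or ab ac bc.
  rewrite /next /= ?eqxx ?(negbTE ab, negbTE ac, negbTE bc, negbTE ba, negbTE ca, negbTE cb) /=.
  by rewrite !G_pos // !inE eqxx ?orbT.
apply: (equiv0_ext _ (equiv0_gen Hg)) => g.
rewrite /cycle_rel /next /= ?eqxx ?(negbTE ab, negbTE ac, negbTE bc, negbTE ba, negbTE ca, negbTE cb) /=.
rewrite del_G (G_perm (_ : perm_eq ((a, b) :: (b, c) :: (c, a) :: C) ((b, c) :: (a, b) :: (c, a) :: C))); last by permt.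
rewrite del_G (G_perm (_ : perm_eq ((b, c) :: (a, b) :: (c, a) :: C) ((c, a) :: (a, b) :: (b, c) :: C))); last by permt.
by rewrite del_G !cf_cons cf_nil; ring.
Qed.

Lemma G_swap n (e1 e2 : 'I_n * 'I_n) C : G (e1 :: e2 :: C) = G (e2 :: e1 :: C).
Proof. by apply: G_perm; permt. Qed.

Lemma nl_cons n (a b : 'I_n) C : a != b -> nl C -> nl ((a, b) :: C).
Proof. by move=> H1 H2; rewrite /nl /= H1. Qed.

Lemma fork_gen (F : fieldType) n (a b c : 'I_n) C : a != b -> a != c -> b != c -> nl C ->
  equiv0 ([:: (1, G ((a, b) :: (a, c) :: C)); (-1, G ((a, b) :: (b, c) :: C));
              (-1, G ((a, c) :: (c, b) :: C))] : fcomb F n).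
Proof.
move=> ab ac bc HC.
have ca : c != a by rewrite eq_sym.
have T := tri_gen F ab ac bc HC.
have R1 := rev_gen F ca (nl_cons ab HC).
have R2 := rev_gen F ca (nl_cons bc HC).
have R3 := rev_gen F bc (nl_cons ac HC).
apply: (equiv0_combA (l := [:: (1, _); (-1, _); (1, _); (-1, _)]) (conj R1 (conj T (conj R2 (conj R3 I))))) => g.
rewrite !big_cons big_nil /= !cf_cons !cf_nil.
rewrite (G_swap (c,a) (a,b)) (G_swap (a,c) (a,b)) (G_swap (c,a) (b,c)) (G_swap (a,c) (b,c)).
rewrite (G_swap (c,b) (a,c)).
ring.
Qed.

Definition sw n (e : 'I_n * 'I_n) := (e.2, e.1).

Lemma G_mid n (s1 s2 : seq ('I_n * 'I_n)) x : G (s1 ++ x :: s2) = G (x :: s1 ++ s2).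
Proof. by apply: G_perm; permt. Qed.

Lemma rev_edges (F : fieldType) n (es C : seq ('I_n * 'I_n)) : nl es -> nl C ->
  equiv0 ([:: (1, G (es ++ C)); (- (-1) ^+ size es, G (map (@sw n) es ++ C))] : fcomb F n).
Proof.
elim: es C => [|[a b] es IH] C /= H HC.
  apply: (equiv0_ext _ (equiv0_nil F n)) => g; rewrite !cf_cons cf_nil expr0; ring.
case/andP: H => ab H.
have H1 : nl (es ++ C) by rewrite /nl all_cat; apply/andP; split.
have ba : b != a by rewrite eq_sym.
have R := rev_gen F ab H1.
have IH' := IH ((b, a) :: C) H (nl_cons ba HC).
apply: (equiv0_combA (l := [:: (1, _); (-1, _)]) (conj R (conj IH' I))) => g.
rewrite !big_cons big_nil /= !cf_cons !cf_nil !G_mid /sw /= exprS; ring.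
Qed.

End PartB.
Import PartB.

Module PartC.
Local Open Scope ring_scope.

Fixpoint pe (T : Type) (s : seq T) : seq (T * T) :=
  match s with x :: ((y :: _) as s') => (x, y) :: pe s' | _ => [::] end.

Fixpoint shuf (T : Type) (xs ys : seq T) {struct xs} : seq (seq T) :=
  match xs with
  | [::] => [:: ys]
  | x :: xs' =>
    let fix sh (ys : seq T) : seq (seq T) :=
      match ys with
      | [::] => [:: xs]
      | y :: ys' => map (cons x) (shuf xs' ys) ++ map (cons y) (sh ys')
      end in sh ys
  end.

Lemma pe0 (T : Type) : pe ([::] : seq T) = [::]. Proof. by []. Qed.
Lemma pe1 (T : Type) (x : T) : pe [:: x] = [::]. Proof. by []. Qed.
Lemma peSS (T : Type) (x y : T) s : pe (x :: y :: s) = (x, y) :: pe (y :: s). Proof. by []. Qed.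
Arguments pe : simpl never.

Lemma shuf0s (T : Type) ys : shuf ([::] : seq T) ys = [:: ys].
Proof. by []. Qed.
Lemma shufs0 (T : Type) (xs : seq T) : shuf xs [::] = [:: xs].
Proof. by case: xs. Qed.
Lemma shufSS (T : Type) (x y : T) xs ys :
  shuf (x :: xs) (y :: ys) = map (cons x) (shuf xs (y :: ys)) ++ map (cons y) (shuf (x :: xs) ys).
Proof. by []. Qed.
Arguments shuf : simpl never.

Lemma nl_pe n (s : seq 'I_n) : uniq s -> nl (pe s).
Proof.
elim: s => // x [|y s] IH //= /andP [Hx Hu]; apply/andP; split; last exact: IH Hu.
by apply: contraNneq Hx => ->; rewrite inE eqxx.
Qed.

Lemma nl_cat n (s1 s2 : seq ('I_n * 'I_n)) : nl s1 -> nl s2 -> nl (s1 ++ s2).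
Proof. by move=> H1 H2; rewrite /nl all_cat; apply/andP; split. Qed.


End PartC.
Import PartC.

Module PartD.
Local Open Scope ring_scope.

Lemma tree_shuf (F : fieldType) n (C : seq ('I_n * 'I_n)) r xs ys : nl C -> uniq (r :: xs ++ ys) ->
  equiv0 ((1, G (pe (r :: xs) ++ pe (r :: ys) ++ C)) ::
          [seq (-1, G (pe (r :: w) ++ C)) | w <- shuf xs ys] : fcomb F n).
Proof.
elim: xs r ys C => [|x xs IHx] r ys C HC U.
  apply: (equiv0_ext _ (equiv0_nil F n)) => g; rewrite shuf0s /= ?pe1 !cf_cons cf_nil; ring.
elim: ys r C HC U => [|y ys IHy] r C HC U.
  apply: (equiv0_ext _ (equiv0_nil F n)) => g; rewrite shufs0 /= ?pe1 ?cats0 !cf_cons cf_nil; ring.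
have U1 : uniq (x :: xs ++ y :: ys) by case/andP: U.
have U2 : uniq (y :: (x :: xs) ++ ys).
  by rewrite -(perm_uniq (_ : perm_eq (x :: xs ++ y :: ys) _)) //; permt.
have Hr : r \notin x :: xs ++ y :: ys by case/andP: U.
have Hx : x \notin xs ++ y :: ys by case/andP: U1.
have rx : r != x by apply: contraNneq Hr => ->; rewrite inE eqxx.
have ry : r != y by apply: contraNneq Hr => ->; rewrite inE mem_cat inE eqxx !orbT.
have xy : x != y by apply: contraNneq Hx => ->; rewrite mem_cat inE eqxx !orbT.
have Ux : uniq (x :: xs) by apply: (subseq_uniq _ U1); rewrite -cat_cons prefix_subseq.
have Uy : uniq (y :: ys) by apply: (subseq_uniq _ U1); rewrite -cat_cons suffix_subseq.
have HC' : nl (pe (x :: xs) ++ pe (y :: ys) ++ C) by rewrite !nl_cat ?nl_pe.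
have Fk := fork_gen F rx ry xy HC'.
have I1 := IHx x (y :: ys) ((r, x) :: C) (nl_cons rx HC) U1.
have I2 := IHy y ((r, y) :: C) (nl_cons ry HC) U2.
apply: (equiv0_combA (l := [:: (1, _); (1, _); (1, _)]) (conj Fk (conj I1 (conj I2 I)))) => g.
rewrite !big_cons big_nil /= shufSS map_cat cf_cons cf_cat !cf_map !big_map !cf_cons !cf_nil.
rewrite !cf_map.
have E1 : G ((r, x) :: pe (x :: xs) ++ (r, y) :: pe (y :: ys) ++ C) = G [:: (r, x), (r, y) & pe (x :: xs) ++ pe (y :: ys) ++ C].
  by apply: G_perm; permt.
have E2 : G (pe (x :: xs) ++ (x, y) :: pe (y :: ys) ++ (r, x) :: C) = G [:: (r, x), (x, y) & pe (x :: xs) ++ pe (y :: ys) ++ C].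
  by apply: G_perm; permt.
have E3 : G ((y, x) :: pe (x :: xs) ++ pe (y :: ys) ++ (r, y) :: C) = G [:: (r, y), (y, x) & pe (x :: xs) ++ pe (y :: ys) ++ C].
  by apply: G_perm; permt.
have E4 : forall a w, G (pe [:: r, a & w] ++ C) = G (pe (a :: w) ++ (r, a) :: C).
  by move=> a w; rewrite peSS; apply: G_perm; permt.
rewrite E1 E2 E3.
rewrite [\sum_(j <- shuf xs _) _](eq_bigr (fun j => (G (pe (x :: j) ++ (r, x) :: C) == g)%:R)); last by move=> j _ /=; rewrite E4.
rewrite [\sum_(j <- shuf (x :: xs) ys) _](eq_bigr (fun j => (G (pe (y :: j) ++ (r, y) :: C) == g)%:R)); last by move=> j _ /=; rewrite E4.
ring.
Qed.

End PartD.
Import PartD.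

Module PartE.

Lemma shuf_perm (T : eqType) (xs ys w : seq T) : w \in shuf xs ys -> perm_eq w (xs ++ ys).
Proof.
elim: xs ys w => [|x xs IHx] ys w; first by rewrite shuf0s inE => /eqP ->.
elim: ys w => [|y ys IHy] w; first by rewrite shufs0 inE cats0 => /eqP ->.
rewrite shufSS mem_cat => /orP [] /mapP [w1 Hw1 ->].
  by rewrite /= perm_cons; apply: IHx.
have := IHy _ Hw1; rewrite -(perm_cons y) => /permPl ->.
by rewrite -cat1s perm_catCA.
Qed.

Lemma uniq_swap (T : eqType) (xs ys : seq T) y : uniq (xs ++ y :: ys) = uniq (y :: xs ++ ys).
Proof. by apply: perm_uniq; rewrite -cat1s perm_catCA. Qed.

Lemma shuf_filt (T : eqType) (xs ys w : seq T) : uniq (xs ++ ys) -> w \in shuf xs ys ->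
  [seq z <- w | z \in xs] = xs /\ [seq z <- w | z \in ys] = ys.
Proof.
elim: xs ys w => [|x xs IHx] ys w.
  rewrite shuf0s inE => _ /eqP ->; split; first by rewrite filter_pred0.
  by apply/all_filterP/allP.
elim: ys w => [|y ys IHy] w U.
  rewrite shufs0 inE => /eqP ->; split; first by apply/all_filterP/allP.
  by rewrite filter_pred0.
rewrite shufSS mem_cat => /orP [] /mapP [w1 Hw1 ->].
- have U1 : uniq (xs ++ y :: ys) by case/andP: U.
  have Hx : x \notin xs ++ y :: ys by case/andP: U.
  have [E1 E2] := IHx _ _ U1 Hw1.
  have P := shuf_perm Hw1.
  rewrite /= inE eqxx /=; split.
    congr (_ :: _); rewrite -[RHS]E1; apply: eq_in_filter => z Hz.
    rewrite inE; case: eqP => // Ez; subst z.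
    by move: Hx; rewrite -(perm_mem P) Hz.
  have -> : (x \in y :: ys) = false.
    by apply/negP => H; move: Hx; rewrite mem_cat H orbT.
  exact: E2.
- move: U; rewrite uniq_swap => /andP [Hy U2].
  have [E1 E2] := IHy _ U2 Hw1.
  have P := shuf_perm Hw1.
  rewrite /= [y \in y :: _]inE eqxx /=; split; last first.
    congr (_ :: _); rewrite -[RHS]E2; apply: eq_in_filter => z Hz.
    rewrite inE; case: eqP => // Ez; subst z.
    by move: Hy; rewrite -(perm_mem P) Hz.
  have -> : (y \in x :: xs) = false.
    by apply/negP => H; move: Hy; rewrite mem_cat H.
  exact: E1.
Qed.

Lemma shuf_consl (T : eqType) (x : T) xs ys w : w \in shuf xs ys -> x :: w \in shuf (x :: xs) ys.
Proof.
case: ys => [|y ys].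
  by rewrite !shufs0 !inE => /eqP ->.
by rewrite shufSS mem_cat => H; rewrite (map_f (cons x) H).
Qed.

Lemma shuf_consr (T : eqType) (y : T) xs ys w : w \in shuf xs ys -> y :: w \in shuf xs (y :: ys).
Proof.
case: xs => [|x xs].
  by rewrite !shuf0s !inE => /eqP ->.
by rewrite shufSS mem_cat => H; rewrite (map_f (cons y) H) orbT.
Qed.

Lemma filt_shuf (T : eqType) (xs ys w : seq T) : uniq (xs ++ ys) ->
  all (fun z => z \in xs ++ ys) w ->
  [seq z <- w | z \in xs] = xs -> [seq z <- w | z \in ys] = ys -> w \in shuf xs ys.
Proof.
elim: w xs ys => [|z w IH] xs ys U /=.
  by move=> _ <- <-; rewrite shuf0s inE.
case/andP => Hz Hall.
rewrite mem_cat in Hz; case/orP: Hz => Hz.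
- have Hzy : z \notin ys.
    by move: U; rewrite cat_uniq => /and3P [_ /hasPn H _]; apply/negP => /H; rewrite Hz.
  rewrite Hz (negbTE Hzy) => Ex Ey.
  case: xs Ex U Hz Hall => // x xs [<- Ex] U _ Hall.
  have Ux : uniq (z :: xs) by move: U; rewrite cat_uniq => /andP [].
  have Hzw : z \notin w.
    apply/negP => Hw; move: Ux => /andP [/negP H _]; apply: H.
    by rewrite -Ex mem_filter Hw inE eqxx.
  apply: shuf_consl; apply: IH => //.
  - by case/andP: U.
  - apply/allP => u Hu; move: (allP Hall u Hu); rewrite /= inE; case: eqP => // Eu.
    by subst u; rewrite Hu in Hzw.
  - rewrite -[RHS]Ex; apply: eq_in_filter => u Hu; rewrite inE; case: eqP => // Eu.
    by subst u; rewrite Hu in Hzw.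
- have Hzx : z \notin xs.
    by move: U; rewrite cat_uniq => /and3P [_ /hasPn H _]; apply/negP => Hx; move: (H _ Hz); rewrite Hx.
  rewrite Hz (negbTE Hzx) => Ex Ey.
  case: ys Ey U Hz Hzx Hall => // y ys [<- Ey] U _ Hzx Hall.
  move: U; rewrite uniq_swap => /andP [Hzn U].
  have Hzw : z \notin w.
    apply/negP => Hw; move: Hzn; rewrite mem_cat negb_or => /andP [_ /negP H]; apply: H.
    by rewrite -Ey mem_filter Hw inE eqxx.
  apply: shuf_consr; apply: IH => //.
  - apply/allP => u Hu; move: (allP Hall u Hu); rewrite /= !mem_cat inE; case: eqP => // Eu.
    by subst u; rewrite Hu in Hzw.
  - rewrite -[RHS]Ey; apply: eq_in_filter => u Hu; rewrite inE; case: eqP => // Eu.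
    by subst u; rewrite Hu in Hzw.
Qed.

Lemma shuf_uniq (T : eqType) (xs ys : seq T) : uniq (xs ++ ys) -> uniq (shuf xs ys).
Proof.
elim: xs ys => [|x xs IHx] ys; first by rewrite shuf0s.
elim: ys => [|y ys IHy] U; first by rewrite shufs0.
have xy : x != y.
  by move: U => /andP [H _]; apply: contraNneq H => ->; rewrite mem_cat inE eqxx orbT.
rewrite shufSS cat_uniq !map_inj_uniq; try by move=> ? ? [].
apply/and3P; split.
- by apply: IHx; case/andP: U.
- apply/hasPn => w /mapP [w2 _ ->]; apply/mapP => [[w1 _ [E _]]].
  by rewrite E eqxx in xy.
- by apply: IHy; move: U; rewrite uniq_swap => /andP [].
Qed.

End PartE.
Import PartE.

Module PartF.

Definition seqp n (p : 'S_n) := [seq p i | i <- enum 'I_n].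
Definition Dl n (c : 'I_n) := [seq i <- rev (enum 'I_n) | (nat_of_ord i < c)%N].
Definition Il n (c : 'I_n) := [seq i <- enum 'I_n | (c < nat_of_ord i)%N].
Definition Q n (c : 'I_n) : rel 'I_n := fun a b =>
  ((a < c)%N ==> (b < c)%N ==> (b < a)%N) && ((c < a)%N ==> (c < b)%N ==> (a < b)%N).

Lemma pairwise_rev (T : Type) (r : rel T) s : pairwise r (rev s) = pairwise (fun x y => r y x) s.
Proof.
elim: s => //= x s IH; rewrite rev_cons pairwise_rcons IH all_rev; congr (_ && _).
Qed.

Lemma pairwise_filterE (T : Type) (r : rel T) (a : pred T) s :
  pairwise r (filter a s) = pairwise (fun x y => a x ==> a y ==> r x y) s.
Proof.
elim: s => //= x s IH; case: (a x) => /=; rewrite ?pairwise_cons IH ?all_filter //.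
by rewrite all_predT.
Qed.

Lemma pairwise_enum n (R : rel 'I_n) :
  pairwise R (enum 'I_n) <-> (forall i j : 'I_n, (i < j)%N -> R i j).
Proof.
split.
  move=> H i j Hij; move/(pairwiseP i): H => H.
  have := H i j; rewrite !nth_ord_enum; apply => //; by rewrite inE size_enum_ord ltn_ord.
case: n R => [|n] R H; first by rewrite enum_ord0.
apply/(pairwiseP ord0) => i j; rewrite !inE size_enum_ord => Hi Hj Hij.
have E1 := nth_ord_enum ord0 (Ordinal Hi); have E2 := nth_ord_enum ord0 (Ordinal Hj).
simpl in E1, E2; rewrite E1 E2; exact: H.
Qed.

Lemma memD n (c x : 'I_n) : (x \in Dl c) = (x < c)%N.
Proof. by rewrite mem_filter mem_rev mem_enum andbT. Qed.

Lemma memI n (c x : 'I_n) : (x \in Il c) = (c < x)%N.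
Proof. by rewrite mem_filter mem_enum andbT. Qed.

Lemma uniqDI n (c : 'I_n) : uniq (c :: Dl c ++ Il c).
Proof.
rewrite /= mem_cat memD memI ltnn /= cat_uniq.
rewrite filter_uniq ?rev_uniq ?enum_uniq // filter_uniq ?enum_uniq //=.
rewrite andbT; apply/hasPn => x; rewrite memI memD => H; apply/negP => H2; lia.
Qed.

Lemma permDI n (c : 'I_n) : perm_eq (c :: Dl c ++ Il c) (enum 'I_n).
Proof.
apply: uniq_perm; [exact: uniqDI | exact: enum_uniq|] => x.
rewrite mem_enum inE mem_cat memD memI /=.
case: (ltngtP x c) => E; by rewrite ?orbT // (val_inj E) eqxx.
Qed.

Lemma pairD n (c : 'I_n) : pairwise (fun a b : 'I_n => (b < a)%N) (Dl c).
Proof.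
apply: pairwise_filter; rewrite pairwise_rev; apply/pairwise_enum => i j; exact.
Qed.

Lemma pairI n (c : 'I_n) : pairwise (fun a b : 'I_n => (a < b)%N) (Il c).
Proof. by apply: pairwise_filter; apply/pairwise_enum => i j. Qed.

Lemma pairQ n (c : 'I_n) s : pairwise (Q c) s =
  pairwise (fun a b : 'I_n => (b < a)%N) [seq x <- s | (nat_of_ord x < c)%N] &&
  pairwise (fun a b : 'I_n => (a < b)%N) [seq x <- s | (c < nat_of_ord x)%N].
Proof. by rewrite !pairwise_filterE -pairwise_relI; apply: eq_pairwise. Qed.

Lemma seqp_perm n (p : 'S_n) : perm_eq (seqp p) (enum 'I_n).
Proof.
apply: uniq_perm; [by rewrite map_inj_uniq ?enum_uniq //; exact: perm_inj|exact: enum_uniq|].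
move=> x; rewrite mem_enum; apply/mapP; exists (p^-1 x)%g; by rewrite ?mem_enum ?permKV.
Qed.

Lemma seqp_inj n : injective (@seqp n).
Proof.
move=> p q E; apply/permP => i.
by move/eq_in_map: E; apply; rewrite mem_enum.
Qed.

Lemma exists_perm n (s : seq 'I_n.+1) : perm_eq s (enum 'I_n.+1) -> exists p : 'S_n.+1, seqp p = s.
Proof.
move=> P; have U : uniq s by rewrite (perm_uniq P) enum_uniq.
have Hs : size s = n.+1 by rewrite (perm_size P) size_enum_ord.
pose f := fun i : 'I_n.+1 => nth ord0 s i.
have fi : injective f.
  move=> i j /eqP; rewrite /f nth_uniq ?Hs // => /eqP; exact: val_inj.
exists (perm fi); apply: (@eq_from_nth _ ord0); first by rewrite size_map size_enum_ord Hs.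
move=> i; rewrite size_map size_enum_ord => Hi.
by rewrite (nth_map ord0) ?size_enum_ord // permE /f nth_enum_ord.
Qed.

End PartF.
Import PartF.

Module PartG.

Lemma mono_pair n (p : 'S_n.+1) (c : 'I_n.+1) : p ord0 = c -> monotone p = pairwise (Q c) (seqp p).
Proof.
move=> Hc; rewrite /seqp pairwise_map; apply/idP/idP.
- move=> /forallP M; apply/pairwise_enum => j i Hji /=.
  rewrite /Q; apply/andP; split; apply/implyP => H1; apply/implyP => H2.
  + have := M i; case/orP => /forallP M'.
      have := M' ord0; rewrite /= Hc; move/implyP => H; have := H (leq_ltn_trans (leq0n _) Hji); lia.
    by have := M' j; rewrite Hji.
  + have := M i; case/orP => /forallP M'; last first.
      have := M' ord0; rewrite /= Hc; move/implyP => H; have := H (leq_ltn_trans (leq0n _) Hji); lia.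
    by have := M' j; rewrite Hji.
- move/pairwise_enum => H; apply/forallP => i.
  case: (ltngtP (p i) c) => Hi.
  + apply/orP; right; apply/forallP => j; apply/implyP => Hj.
    have := H j i Hj; rewrite /Q /= => /andP [H1 _].
    case: (ltnP (p j) c) => Hjc; first by move: H1; rewrite Hjc Hi.
    lia.
  + apply/orP; left; apply/forallP => j; apply/implyP => Hj.
    have := H j i Hj; rewrite /Q /= => /andP [_ H1].
    case: (ltnP c (p j)) => Hjc; first by move: H1; rewrite Hjc Hi.
    lia.
  + have Ei : i = ord0.
      apply: (@perm_inj _ p); rewrite Hc; exact: (val_inj Hi).
    apply/orP; left; apply/forallP => j; apply/implyP; by rewrite Ei ltn0.
Qed.

Lemma Mnk_iff n k (c : 'I_n.+1) (p : 'S_n.+1) : nat_of_ord c = k.-1 ->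
  (p \in Mnk n.+1 k) = (p ord0 == c) && monotone p.
Proof.
move=> Hc; rewrite /Mnk inE andbC; congr (_ && _); apply/forallP/eqP.
- move=> H; apply: val_inj; move/implyP: (H ord0) => /(_ (eqxx _)) /eqP ->; exact: (esym Hc).
- move=> E i; apply/implyP => /eqP Hi; have -> : i = ord0 by apply: val_inj.
  by rewrite E; apply/eqP.
Qed.

Lemma comb n k (c : 'I_n.+1) : nat_of_ord c = k.-1 ->
  perm_eq [seq seqp p | p <- enum (Mnk n.+1 k)] [seq c :: w | w <- shuf (Dl c) (Il c)].
Proof.
move=> Hc.
have UDI : uniq (Dl c ++ Il c) by case/andP: (uniqDI c).
have FD : [seq x <- Dl c | (nat_of_ord x < c)%N] = Dl c.
  by apply/all_filterP/allP => x; rewrite memD.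
have FI : [seq x <- Il c | (nat_of_ord x < c)%N] = [::].
  rewrite -(filter_pred0 (Il c)); apply: eq_in_filter => x; rewrite memI => H.
  by apply/negbTE; rewrite -leqNgt ltnW.
have FD' : [seq x <- Dl c | (c < nat_of_ord x)%N] = [::].
  rewrite -(filter_pred0 (Dl c)); apply: eq_in_filter => x; rewrite memD => H.
  by apply/negbTE; rewrite -leqNgt ltnW.
have FI' : [seq x <- Il c | (c < nat_of_ord x)%N] = Il c.
  by apply/all_filterP/allP => x; rewrite memI.
apply: uniq_perm.
- rewrite map_inj_uniq ?enum_uniq //; exact: seqp_inj.
- rewrite map_inj_uniq ?shuf_uniq //; by move=> ? ? [].
move=> t; apply/mapP/mapP.
- case=> p; rewrite mem_enum (Mnk_iff _ Hc) => /andP [/eqP H0 M] ->.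
  have Ht : seqp p = c :: [seq p (lift ord0 i) | i <- enum 'I_n].
    by rewrite /seqp enum_ordSl /= H0 -map_comp.
  exists [seq p (lift ord0 i) | i <- enum 'I_n]; last exact Ht.
  set w := [seq p (lift ord0 i) | i <- enum 'I_n].
  have Pw : perm_eq w (Dl c ++ Il c).
    by have := seqp_perm p; rewrite Ht -(permPr (permDI c)) perm_cons.
  move: M; rewrite (mono_pair H0) Ht pairwise_cons => /andP [_]; rewrite pairQ => /andP [PD PI].
  have As : antisymmetric (fun a b : 'I_n.+1 => (b < a)%N).
    by move=> a b /andP [H1 H2]; lia.
  have As' : antisymmetric (fun a b : 'I_n.+1 => (a < b)%N).
    by move=> a b /andP [H1 H2]; lia.
  apply: filt_shuf => //.
  + by apply/allP => z Hz; rewrite -(perm_mem Pw).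
  + rewrite (eq_filter (memD c)); apply: (pairwise_eq As PD (pairD c)).
    by have := perm_filter (fun x : 'I_n.+1 => (nat_of_ord x < c)%N) Pw; rewrite filter_cat FD FI cats0.
  + rewrite (eq_filter (memI c)); apply: (pairwise_eq As' PI (pairI c)).
    by have := perm_filter (fun x : 'I_n.+1 => (c < nat_of_ord x)%N) Pw; rewrite filter_cat FD' FI'.
- case=> w Hw ->.
  have Pw := shuf_perm Hw.
  have [E1 E2] := shuf_filt UDI Hw.
  have Pt : perm_eq (c :: w) (enum 'I_n.+1) by rewrite -(permPr (permDI c)) perm_cons.
  have [p Hp] := exists_perm Pt.
  exists p => //; rewrite mem_enum (Mnk_iff _ Hc).
  have H0 : p ord0 = c by move: Hp; rewrite /seqp enum_ordSl /= => [[]].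
  rewrite H0 eqxx /= (mono_pair H0) Hp pairwise_cons pairQ.
  apply/and3P; split.
  + by apply/allP => z _; rewrite /Q ltnn.
  + by rewrite -(eq_filter (memD c)) E1; exact: pairD.
  + by rewrite -(eq_filter (memI c)) E2; exact: pairI.
Qed.

End PartG.
Import PartG.

Module PartH.

Definition swp (T : Type) (e : T * T) := (e.2, e.1).

Lemma pe_cat_mid (T : Type) (s t : seq T) x : pe (s ++ x :: t) = pe (rcons s x) ++ pe (x :: t).
Proof.
elim: s => [|a s IH] //; case: s IH => [|b s] IH //.
by rewrite cat_cons cat_cons peSS -cat_cons IH rcons_cons rcons_cons peSS.
Qed.

Lemma pe_rev (T : Type) (s : seq T) : pe (rev s) = rev (map (@swp T) (pe s)).
Proof.
elim: s => // x s IH; case: s IH => [|y s] IH //.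
have -> : rev [:: x, y & s] = rev s ++ [:: y; x] by rewrite !rev_cons -!cats1 -catA.
rewrite pe_cat_mid -rev_cons IH peSS /= rev_cons -cats1; congr (_ ++ _).
Qed.

Lemma pe_map (T1 T2 : Type) (f : T1 -> T2) s : pe (map f s) = map (fun e => (f e.1, f e.2)) (pe s).
Proof.
elim: s => // x s IH; case: s IH => [|y s] IH //.
by rewrite map_cons map_cons !peSS -map_cons IH.
Qed.

Lemma count_pe_iota m l a b :
  count_mem (a, b) (pe (iota m l)) = ((m <= a) && (a.+1 < m + l) && (b == a.+1)).
Proof.
elim: l m => [|l IH] m.
  rewrite /=; lia.
case: l IH => [|l] IH.
  rewrite /=; lia.
rewrite [iota _ _]/= peSS -[m.+1 :: _]/(iota m.+1 l.+1) /= IH xpair_eqE.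

lia.
Qed.

Definition vv n (e : 'I_n * 'I_n) := (nat_of_ord e.1, nat_of_ord e.2).

Lemma vv_inj n : injective (@vv n).
Proof. by move=> [a b] [c d] [/val_inj -> /val_inj ->]. Qed.

Lemma count_vv n (x : 'I_n * 'I_n) es : count_mem x es = count_mem (vv x) (map (@vv n) es).
Proof.
rewrite count_map; apply: eq_count => e /=; apply/eqP/eqP => [->//|]; exact: vv_inj.
Qed.

Lemma Lambda_G n : Lambda n = G (pe (enum 'I_n)).
Proof.
have E : map (@vv n) (pe (enum 'I_n)) = pe (iota 0 n).
  by rewrite -val_enum_ord pe_map.
apply/ffunP => [[i j]].
rewrite !ffunE count_vv E count_pe_iota /vv /= add0n.
have := ltn_ord i; have := ltn_ord j; clear E; lia.
Qed.

Lemma permEq n (p : 'S_n) x y : (p x == y) = (x == (p^-1)%g y).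
Proof. by apply/eqP/eqP => [<-|->]; rewrite ?permK ?permKV. Qed.

Lemma relabel_G n (p : 'S_n) es :
  relabel p (G es) = G (map (fun e => (p e.1, p e.2)) es).
Proof.
apply/ffunP => [[a b]]; rewrite !ffunE count_map; apply: eq_count => [[e1 e2]] /=.
by rewrite !xpair_eqE !permEq.
Qed.

Lemma relabel_Lambda n (p : 'S_n) : relabel p (Lambda n) = G (pe (seqp p)).
Proof. by rewrite Lambda_G relabel_G /seqp pe_map. Qed.


Lemma map_val_Dl n (c : 'I_n) : map val (Dl c) = rev (iota 0 c).
Proof.
rewrite /Dl -(filter_map val (fun x => x < c)) map_rev val_enum_ord filter_rev.
by rewrite (filter_iota_ltn 0 (ltnW (ltn_ord c))).
Qed.

Lemma map_val_Il n (c : 'I_n) : map val (Il c) = iota c.+1 (n - c.+1).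
Proof.
rewrite /Il -(filter_map val (fun x => c < x)) val_enum_ord.
have -> : iota 0 n = iota 0 c.+1 ++ iota c.+1 (n - c.+1).
  by rewrite -iotaD; congr iota; have := ltn_ord c; lia.
rewrite filter_cat.
rewrite (_ : [seq x <- iota 0 c.+1 | c < x] = [::]).
  rewrite /=; apply/all_filterP/allP => x; rewrite mem_iota; lia.
rewrite -(filter_pred0 (iota 0 c.+1)); apply: eq_in_filter => x; rewrite mem_iota /=; lia.
Qed.

Lemma swpK (T : Type) : cancel (@swp T) (@swp T).
Proof. by case. Qed.

Lemma perm_Lam n (c : 'I_n.+1) :
  perm_eq (pe (enum 'I_n.+1)) (map (@sw n.+1) (pe (c :: Dl c)) ++ pe (c :: Il c)).
Proof.
apply: (perm_map_inj (@vv_inj n.+1)); rewrite map_cat.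
have E0 : map (@vv n.+1) (pe (enum 'I_n.+1)) = pe (iota 0 n.+1) by rewrite -val_enum_ord pe_map.
have E1 : map (@vv n.+1) (map (@sw n.+1) (pe (c :: Dl c))) = map (@swp nat) (pe (nat_of_ord c :: rev (iota 0 c))).
  rewrite -(map_val_Dl c) (_ : nat_of_ord c :: map val (Dl c) = map val (c :: Dl c)) // pe_map.
  by rewrite -!map_comp.
have E2 : map (@vv n.+1) (pe (c :: Il c)) = pe (nat_of_ord c :: iota c.+1 (n.+1 - c.+1)).
  by rewrite -(map_val_Il c) (_ : nat_of_ord c :: map val (Il c) = map val (c :: Il c)) // pe_map.
rewrite E0 E1 E2.
have Hs : n.+1 - c = (n.+1 - c.+1).+1 by have := ltn_ord c; lia.
have Hi : iota 0 n.+1 = iota 0 c ++ nat_of_ord c :: iota c.+1 (n.+1 - c.+1).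
  rewrite -[_ :: iota _ _]/(iota c (n.+1 - c.+1).+1) -Hs -iotaD; congr iota; have := ltn_ord c; lia.
have Hr : nat_of_ord c :: rev (iota 0 c) = rev (rcons (iota 0 c) c) by rewrite rev_rcons.
rewrite Hi pe_cat_mid Hr pe_rev map_rev (mapK (@swpK nat)).
by rewrite perm_cat2r perm_sym perm_rev.
Qed.

End PartH.
Import PartH.

Module PartI.
Local Open Scope ring_scope.

Lemma nl_sw n (es : seq ('I_n * 'I_n)) : nl es -> nl (map (@sw n) es).
Proof. by rewrite /nl all_map => /allP H; apply/allP => e /H /=; rewrite eq_sym. Qed.

Lemma size_pe (T : Type) (x : T) s : size (pe (x :: s)) = size s.
Proof. by elim: s x => // y s IH x; rewrite peSS /= IH. Qed.

Lemma swK n : cancel (@sw n) (@sw n).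
Proof. by case. Qed.

Theorem main (F : fieldType) (n k : nat) :
  [pchar F]%R =i pred0 -> (2 <= n)%N -> (2 <= k <= n)%N ->
  equiv0 (lemma_comb F n k).
Proof.
move=> _ Hn /andP [Hk Hkn].
case: n Hn Hkn => [//|n] Hn Hkn.
have Hc' : (k.-1 < n.+1)%N by lia.
pose c := Ordinal Hc'.
have Hc : nat_of_ord c = k.-1 by [].
have UD : uniq (c :: Dl c).
  by apply: (subseq_uniq _ (uniqDI c)); rewrite -cat_cons prefix_subseq.
have UI : uniq (c :: Il c).
  by apply: (subseq_uniq _ (uniqDI c)); rewrite /= eqxx suffix_subseq.
have Rv := rev_edges F (nl_sw (nl_pe UD)) (nl_pe UI).
have Tr := tree_shuf F (C := [::]) (isT : nl [::]) (uniqDI c).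
have SZ : size (map (@sw n.+1) (pe (c :: Dl c))) = k.-1.
  by rewrite size_map size_pe -(size_map val) map_val_Dl size_rev size_iota.
have LG : Lambda n.+1 = G (map (@sw n.+1) (pe (c :: Dl c)) ++ pe (c :: Il c)).
  by rewrite Lambda_G; apply: G_perm; exact: perm_Lam.
have Ek : (-1) ^+ k = - (-1) ^+ k.-1 :> F by case: k Hk {Hc' c Hc UD UI Rv Tr SZ LG Hkn} => // k' _; rewrite exprS mulN1r.
apply: (equiv0_combA (l := [:: (1, _); ((-1) ^+ k.-1, _)]) (conj Rv (conj Tr I))) => g.
rewrite /lemma_comb (@cf_cons F n.+1) (@cf_map F n.+1) !big_cons big_nil /= !(@cf_cons F n.+1) (@cf_map F n.+1) (@cf_nil F n.+1).
rewrite SZ (mapK (@swK n.+1)) !cats0 Ek.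
rewrite (eq_bigr (fun p => (G (pe (seqp p)) == g)%:R)); last by move=> p _; rewrite relabel_Lambda.
rewrite [\sum_(w <- shuf _ _) _](eq_bigr (fun w => (G (pe (c :: w)) == g)%:R)); last by move=> w _; rewrite cats0.
rewrite LG -(big_map (@seqp n.+1) xpredT (fun s => (G (pe s) == g)%:R)).
rewrite (perm_big _ (comb Hc)) big_map.
ring.
Qed.

End PartI.
Import PartI.

Theorem lemma4p8 (F : fieldType) (n k : nat) :
  [pchar F]%R =i pred0 -> (2 <= n)%N -> (2 <= k <= n)%N ->
  equiv0 (lemma_comb F n k).
Proof. exact: PartI.main. Qed.
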